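(* Let $i,k\ge 3$ be integers and put $r=\lfloor (L_i-1)/F_k\rfloor$. Then $$g_0(L_i,L_{i+2},L_{i+k})=\begin{cases}(L_i-1)L_{i+2}-L_i(rF_{k-2}+1) & \text{if } r=0, \text{ or } r\ge 1 \text{ and } (L_i-rF_k)L_{i+2}>F_{k-2}L_i,\\ (rF_k-1)L_{i+2}-L_i\bigl((r-1)F_{k-2}+1\bigr) & \text{otherwise.}\end{cases}$$
   Context: Fibonacci numbers: $F_0=0$, $F_1=1$, $F_n=F_{n-1}+F_{n-2}$. Lucas numbers: $L_0=2$, $L_1=1$, $L_n=L_{n-1}+L_{n-2}$. For positive integers $a_1,\dots,a_l$ with $\gcd(a_1,\dots,a_l)=1$ and an integer $n$, let $d(n;a_1,\dots,a_l)$ be the number of tuples $(x_1,\dots,x_l)$ of nonnegative integers with $a_1x_1+\dots+a_lx_l=n$. For a nonnegative integer $p$, the $p$-Frobenius number $g_p(a_1,\dots,a_l)$ is the largest integer $n$ with $d(n;a_1,\dots,a_l)\le p$ (so $g_0$ is the classical Frobenius number). *)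

(* Defs.v *)
From mathcomp Require Import all_boot all_order all_algebra.
Set Implicit Arguments. Unset Strict Implicit. Unset Printing Implicit Defensive.
Import Order.TTheory GRing.Theory Num.Theory.

Fixpoint fib (n : nat) : nat :=
  match n with
  | 0 => 0
  | 1 => 1
  | (m.+1 as n').+1 => fib n' + fib m
  end.

Fixpoint lucas (n : nat) : nat :=
  match n with
  | 0 => 2
  | 1 => 1
  | (m.+1 as n').+1 => lucas n' + lucas m
  end.

(* nsols s n = number of tuples (x_1,...,x_l) of nonnegative integers with
   a_1 x_1 + ... + a_l x_l = n, where s = [:: a_1; ...; a_l] are positive.
   Computed by enumerating x_1 (which satisfies a_1 x_1 <= n, so x_1 <= n
   since a_1 >= 1). *)
Fixpoint nsols (s : seq nat) (n : nat) : nat :=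
  match s with
  | [::] => (n == 0)
  | a :: s' => \sum_(x < n.+1 | a * x <= n) nsols s' (n - a * x)
  end.

Definition dcount (s : seq nat) (n : int) : nat :=
  match n with
  | Posz m => nsols s m
  | Negz _ => 0
  end.

Definition is_pFrobenius (p : nat) (s : seq nat) (g : int) : Prop :=
  (dcount s g <= p)%N /\ (forall n : int, (g < n)%R -> (p < dcount s n)%N).

(* Main.v *)
Require Import Defs.
From mathcomp Require Import all_boot all_order all_algebra zify ring.
Import Order.TTheory GRing.Theory Num.Theory.

Lemma lucasSS n : lucas n.+2 = lucas n.+1 + lucas n. Proof. by []. Qed.
Lemma fibSS n : fib n.+2 = fib n.+1 + fib n. Proof. by []. Qed.

Arguments fib : simpl never.
Arguments lucas : simpl never.
Lemma fibL_aux i k : (lucas (k + i).+2 + fib k * lucas i = fib k.+2 * lucas i.+2)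
  /\ (lucas (k.+1 + i).+2 + fib k.+1 * lucas i = fib k.+3 * lucas i.+2).
Proof.
elim: k => [|k [IH1 IH2]].
  split; first by rewrite add0n mul0n addn0 mul1n.
  rewrite add1n !lucasSS mul1n (_ : fib 3 = 2) //. lia.
split; first exact: IH2.
have e1 : lucas (k.+2+i).+2 = lucas (k.+1+i).+2 + lucas (k+i).+2 by rewrite !addSn.
have e2 : fib k.+2 = fib k.+1 + fib k by [].
have e3 : fib k.+4 = fib k.+3 + fib k.+2 by [].
have p2 : fib k.+2 * lucas i = fib k.+1 * lucas i + fib k * lucas i by rewrite {1}e2 mulnDl.
have p3 : fib k.+4 * lucas i.+2 = fib k.+3 * lucas i.+2 + fib k.+2 * lucas i.+2 by rewrite {1}e3 mulnDl.
rewrite {}e1 {}p2 {}p3. lia.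
Qed.

Lemma fibL i k : lucas (k + i).+2 + fib k * lucas i = fib k.+2 * lucas i.+2.
Proof. by case: (fibL_aux i k). Qed.

Lemma lucas_cop n : gcdn (lucas n) (lucas n.+1) = 1.
Proof.
elim: n => [//|n IH]. by rewrite lucasSS gcdnDl gcdnC.
Qed.

Lemma lucas_cop2 n : gcdn (lucas n) (lucas n.+2) = 1.
Proof. by rewrite lucasSS gcdnDr lucas_cop. Qed.

Lemma lucas_ge1 n : 1 <= lucas n.
Proof. elim: n => [//|n IH]; case: n IH => [//|n IH]; rewrite lucasSS; lia. Qed.

Lemma lucas_mono n : lucas n.+1 <= lucas n.+2.
Proof. rewrite lucasSS; lia. Qed.

Lemma lucas2 n : 2 * lucas n.+1 <= lucas n.+3.
Proof. rewrite (lucasSS n.+1). have := lucas_mono n. lia. Qed.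

Lemma fib_mono n : fib n <= fib n.+2.
Proof. rewrite fibSS; lia. Qed.

Lemma fib_ge1 n : 1 <= fib n.+1.
Proof. elim: n => [//|n IH]; rewrite fibSS; lia. Qed.

Lemma sum_pos N (P : pred 'I_N) (f : 'I_N -> nat) :
  (0 < \sum_(x < N | P x) f x)%N <-> exists x : 'I_N, P x /\ 0 < f x.
Proof.
split.
  move=> H; case: (boolP [exists x, P x && (0 < f x)]) => [/existsP [x /andP[??]]|/existsPn H'].
    by exists x.
  move: H; rewrite big1 // => x Px; move: (H' x); rewrite Px /=; lia.
move=> [x [Px fx]]; rewrite (bigD1 x) //=; lia.
Qed.

Lemma nsols_cons a s n : 0 < a ->
  0 < nsols (a :: s) n <-> exists x, a * x <= n /\ 0 < nsols s (n - a * x).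
Proof.
move=> ha /=; rewrite sum_pos; split.
  by move=> [x [h1 h2]]; exists (val x).
move=> [x [h1 h2]]; have xlt : x < n.+1 by nia.
by exists (Ordinal xlt).
Qed.

Lemma nsols3 a b c n : 0 < a -> 0 < b -> 0 < c ->
  0 < nsols [:: a; b; c] n <-> exists x y z, a * x + b * y + c * z = n.
Proof.
move=> ha hb hc; rewrite nsols_cons //; split.
  move=> [x [h1 /(nsols_cons _ _ _ hb) [y [h2 /(nsols_cons _ _ _ hc) [z [h3 h4]]]]]].
  exists x, y, z; move: h4 => /=; case: eqP => // h4 _; lia.
move=> [x [y [z e]]]; exists x; split; first lia.
apply/(nsols_cons _ _ _ hb); exists y; split; first lia.
apply/(nsols_cons _ _ _ hc); exists z; split; first lia.
rewrite /= (_ : _ - _ = 0) //; lia.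
Qed.
Local Open Scope ring_scope.

Lemma bez (a b : nat) : gcdn a b = 1%N -> exists p q : int, p * a%:Z + q * b%:Z = 1.
Proof.
move=> h; case: (Bezoutz a%:Z b%:Z) => p [q e]; exists p, q; rewrite e /gcdz /= h //.
Qed.

Lemma core (a b c F G T Q : nat) (g : int) :
  (0 < a)%N -> (0 < F)%N -> (G <= F)%N -> (2 * a <= b)%N -> gcdn a b = 1%N ->
  (c + G * a = F * b)%N ->
  g = T%:Z * b%:Z - Q%:Z * G%:Z * a%:Z - a%:Z -> (T < a)%N -> (T < Q.+1 * F)%N ->
  (forall t : nat, (t < a)%N ->
     t%:Z * b%:Z - (t %/ F)%:Z * G%:Z * a%:Z <= g + a%:Z) ->
  is_pFrobenius 0 [:: a; b; c] g.
Proof.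
move=> ha hF hGF h2a hab hc hg hTa hTQ hbd.
have [p [q hpq]] := bez _ _ hab.
have hc' : c%:Z = F%:Z * b%:Z - G%:Z * a%:Z by lia.
split.
  case: g hg hbd => [m|m] hg _; last by [].
  rewrite /dcount leqNgt; apply/negP.
  have hb : (0 < b)%N by lia.
  have hcp : (0 < c)%N by nia.
  move/(nsols3 _ _ _ _ ha hb hcp) => [x [y [z hxyz]]].
  pose u : int := y%:Z + z%:Z * F%:Z.
  have key : (T%:Z - u) * b%:Z = a%:Z * (x%:Z + 1 + Q%:Z * G%:Z - z%:Z * G%:Z).
    rewrite /u; lia.
  pose e : int := p * (T%:Z - u) + q * (x%:Z + 1 + Q%:Z * G%:Z - z%:Z * G%:Z).
  have he : T%:Z - u = a%:Z * e.
    transitivity ((T%:Z - u) * (p * a%:Z + q * b%:Z)); first by rewrite hpq mulr1.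
    rewrite mulrDr.
    have -> : (T%:Z - u) * (q * b%:Z) = q * ((T%:Z - u) * b%:Z) by ring.
    rewrite key /e; ring.
  have hu0 : 0 <= u by rewrite /u; lia.
  case: (ltrgtP e 0) => [eneg|epos|e0].
  -
    have hua : T%:Z + a%:Z <= u by nia.
    have h1 : F%:Z * (y%:Z * b%:Z + z%:Z * c%:Z) >= u * c%:Z.
      rewrite /u. have : y%:Z * c%:Z <= y%:Z * (F%:Z * b%:Z) by apply: ler_wpM2l; lia.
      lia.
    have h2 : u * c%:Z >= (T%:Z + a%:Z) * c%:Z by apply: ler_wpM2r; lia.
    have h3 : (T%:Z + a%:Z) * G%:Z * a%:Z <= (2 * a%:Z) * G%:Z * a%:Z.
      apply: ler_wpM2r; first lia. apply: ler_wpM2r; lia.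
    have h4 : (2 * a%:Z) * G%:Z * a%:Z <= F%:Z * b%:Z * a%:Z.
      apply: ler_wpM2r; first lia. nia.
    have h5 : (y%:Z * b%:Z + z%:Z * c%:Z) <= T%:Z * b%:Z - a%:Z.
      have : 0 <= Q%:Z * G%:Z * a%:Z by nia. lia.
    have h6 : F%:Z * (y%:Z * b%:Z + z%:Z * c%:Z) <= F%:Z * (T%:Z * b%:Z - a%:Z) by apply: ler_wpM2l; lia.
    rewrite hc' in h2. nia.
  - have : a%:Z <= a%:Z * e by nia. lia.
  - have hut : u = T%:Z by move: he; rewrite e0 mulr0; lia.
    have hzQ : (z <= Q)%N.
      rewrite leqNgt; apply/negP => hzq.
      have : (Q.+1 * F <= z * F)%N by rewrite leq_mul2r hzq orbT.
      move: hut; rewrite /u; lia.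
    have : z%:Z * G%:Z * a%:Z <= Q%:Z * G%:Z * a%:Z.
      apply: ler_wpM2r; first lia. apply: ler_wpM2r; lia.
    move: hut; rewrite /u; nia.
move=> n hgn.
pose t : int := ((n * q) %% a%:Z)%Z.
have ht0 : 0 <= t by apply: modz_ge0; lia.
have hta : t < a%:Z by apply: ltz_pmod; lia.
have hnq := divz_eq (n * q) a%:Z.
pose tn := `|t|%N.
have htn : t = tn%:Z by rewrite /tn gez0_abs.
have htna : (tn < a)%N by lia.
pose Q0 := (tn %/ F)%N. pose S0 := (tn %% F)%N.
have hdiv : tn = (Q0 * F + S0)%N by rewrite /Q0 /S0 -divn_eq.
have hbd0 := hbd tn htna.
pose K : int := n * p + ((n * q) %/ a%:Z)%Z * b%:Z.
have hK : n - tn%:Z * b%:Z = a%:Z * K.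
  rewrite -htn /t.
  have -> : ((n * q) %% a%:Z)%Z = n * q - ((n * q) %/ a%:Z)%Z * a%:Z by lia.
  have e1 : n = n * (p * a%:Z + q * b%:Z) by rewrite hpq mulr1.
  rewrite {1}e1 /K; ring.
have hm : S0%:Z * b%:Z + Q0%:Z * c%:Z = tn%:Z * b%:Z - Q0%:Z * G%:Z * a%:Z.
  rewrite hc' hdiv; lia.
pose w : int := K + Q0%:Z * G%:Z.
have hw : n = S0%:Z * b%:Z + Q0%:Z * c%:Z + a%:Z * w by rewrite hm /w; lia.
have hw0 : 0 <= w.
  have hbd1 : tn%:Z * b%:Z - Q0%:Z * G%:Z * a%:Z <= g + a%:Z := hbd0.
  have : - a%:Z < a%:Z * w.
    move: hgn hbd1 hw hm; clear; lia.
  case: (lerP 0 w) => // wlt haw.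
  have : a%:Z * w <= a%:Z * (-1) by apply: ler_wpM2l; lia.
  move: haw; clear -wlt; lia.
have hS0 : 0 <= S0%:Z * b%:Z + Q0%:Z * c%:Z by rewrite addr_ge0 // mulr_ge0.
have haw0 : 0 <= a%:Z * w by rewrite mulr_ge0.
clearbody w K S0 Q0 tn t. clear hnq.
case: n hgn hK hw => [N|N] hgn hK hw; last first.
  exfalso; have : 0 <= Negz N by rewrite hw addr_ge0. by [].
rewrite /dcount.
have hb : (0 < b)%N by lia.
have hcp : (0 < c)%N by nia.
apply/(nsols3 _ _ _ _ ha hb hcp).
exists `|w|%N, S0, Q0.
have hw' : w = `|w|%N%:Z by rewrite gez0_abs.
move: hw; rewrite hw'. lia.
Qed.
Lemma B2 (a b c F G t q r : nat) : (c + G * a = F * b)%N ->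
  (t < q.+1 * F)%N -> (q < r)%N ->
  t%:Z * b%:Z - q%:Z * G%:Z * a%:Z <= (r%:Z * F%:Z - 1) * b%:Z - (r%:Z - 1) * G%:Z * a%:Z.
Proof.
move=> hc ht hq.
have [d hd] : exists d, r = (q + 1 + d)%N by exists (r - q - 1)%N; lia.
subst r.
have h1 : (t%:Z + 1) * b%:Z <= (q%:Z + 1) * F%:Z * b%:Z.
  apply: ler_wpM2r; first lia. lia.
have h2 : d%:Z * F%:Z * b%:Z = d%:Z * c%:Z + d%:Z * G%:Z * a%:Z.
  have : F%:Z * b%:Z = c%:Z + G%:Z * a%:Z by lia.
  move=> e; rewrite -mulrA e; ring.
have h3 : 0 <= d%:Z * c%:Z by rewrite mulr_ge0.
move: h1 h2 h3; clear. lia.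
Qed.

Lemma main (a b c F G : nat) :
  (0 < a)%N -> (0 < F)%N -> (G <= F)%N -> (2 * a <= b)%N -> gcdn a b = 1%N ->
  (c + G * a = F * b)%N ->
  let Li : int := a%:Z in
  let Li2 : int := b%:Z in
  let r : nat := ((a - 1) %/ F)%N in
  let Fk : int := F%:Z in
  let Fk2 : int := G%:Z in
  is_pFrobenius 0 [:: a; b; c]
    (if (r == 0%N) || ((1 <= r)%N && (Fk2 * Li < (Li - r%:Z * Fk) * Li2))
     then (Li - 1) * Li2 - Li * (r%:Z * Fk2 + 1)
     else (r%:Z * Fk - 1) * Li2 - Li * ((r%:Z - 1) * Fk2 + 1)).
Proof.
move=> ha hF hGF h2a hab hc Li Li2 r Fk Fk2.
rewrite /Li /Li2 /Fk /Fk2.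
have hr1 : (r * F <= a - 1)%N by apply: leq_divM.
have hr2 : (a - 1 < r.+1 * F)%N by apply: ltn_ceil.
clearbody r.
have hq : forall t, (t < a)%N -> (t %/ F <= r)%N.
  move=> t ht. have h1 : (t %/ F * F <= t)%N by apply: leq_divM.
  have : (t %/ F * F < r.+1 * F)%N by lia.
  by rewrite ltn_mul2r ltnS => /andP[].
have htq : forall t, (t < (t %/ F).+1 * F)%N by move=> t; apply: ltn_ceil.
have B1 : forall t, (t < a)%N -> t%:Z * b%:Z - r%:Z * G%:Z * a%:Z <= (a%:Z - 1) * b%:Z - r%:Z * G%:Z * a%:Z.
  move=> t ht; rewrite lerD2r; apply: ler_wpM2r; lia.
case: ifP => hcond.
- apply: (@core a b c F G (a - 1)%N r) => //.
  + have -> : ((a - 1)%N%:Z = a%:Z - 1) by lia. ring.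
  + lia.
  move=> t ht.
  have -> : (a%:Z - 1) * b%:Z - a%:Z * (r%:Z * G%:Z + 1) + a%:Z = (a%:Z - 1) * b%:Z - r%:Z * G%:Z * a%:Z by ring.
  have := hq t ht; rewrite leq_eqVlt => /orP[/eqP ->|qlt]; first exact: B1.
  apply: le_trans (B2 _ _ _ _ _ _ _ _ hc (htq t) qlt) _.
  have hr0 : (1 <= r)%N by exact: (leq_ltn_trans (leq0n _) qlt).
  move: hcond; rewrite (_ : (r == 0%N) = false) /=; last by apply/eqP; lia.
  rewrite hr0 /= => hcd.
  have h : (r%:Z * F%:Z - 1) * b%:Z - (r%:Z - 1) * G%:Z * a%:Z - ((a%:Z - 1) * b%:Z - r%:Z * G%:Z * a%:Z)
     = G%:Z * a%:Z - (a%:Z - r%:Z * F%:Z) * b%:Z by ring.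
  rewrite -subr_le0 h; lia.
- have hr0 : (1 <= r)%N.
    rewrite lt0n; apply/negP => /eqP r0; by rewrite r0 eqxx in hcond.
  have hrF : (1 <= r * F)%N by rewrite muln_gt0; apply/andP.
  move: hcond; rewrite (_ : (r == 0%N) = false) /=; last by apply/eqP; lia.
  rewrite hr0 /= => /negbT; rewrite -leNgt => hcd.
  apply: (@core a b c F G (r * F - 1)%N (r - 1)%N) => //.
  + have -> : ((r * F - 1)%N%:Z = r%:Z * F%:Z - 1) by lia.
    have -> : ((r - 1)%N%:Z = r%:Z - 1) by lia. ring.
  + lia.
  + rewrite (_ : (r - 1).+1 = r)%N; lia.
  move=> t ht.
  have -> : (r%:Z * F%:Z - 1) * b%:Z - a%:Z * ((r%:Z - 1) * G%:Z + 1) + a%:Z = (r%:Z * F%:Z - 1) * b%:Z - (r%:Z - 1) * G%:Z * a%:Z by ring.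
  have := hq t ht; rewrite leq_eqVlt => /orP[/eqP eq|qlt]; last exact: (B2 _ _ _ _ _ _ _ _ hc (htq t) qlt).
  rewrite eq; apply: le_trans (B1 t ht) _.
  have h : (a%:Z - 1) * b%:Z - r%:Z * G%:Z * a%:Z - ((r%:Z * F%:Z - 1) * b%:Z - (r%:Z - 1) * G%:Z * a%:Z)
     = (a%:Z - r%:Z * F%:Z) * b%:Z - G%:Z * a%:Z by ring.
  rewrite -subr_le0 h; lia.
Qed.

Theorem theorem1 (i k : nat) (hi : (3 <= i)%N) (hk : (3 <= k)%N) :
  let Li : int := (lucas i)%:Z in
  let Li2 : int := (lucas (i + 2))%:Z in
  let r : nat := ((lucas i - 1) %/ fib k)%N in
  let Fk : int := (fib k)%:Z in
  let Fk2 : int := (fib (k - 2))%:Z in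
  is_pFrobenius 0 [:: lucas i; lucas (i + 2); lucas (i + k)]
    (if (r == 0%N) || ((1 <= r)%N && (Fk2 * Li < (Li - r%:Z * Fk) * Li2))
     then (Li - 1) * Li2 - Li * (r%:Z * Fk2 + 1)
     else (r%:Z * Fk - 1) * Li2 - Li * ((r%:Z - 1) * Fk2 + 1)).
Proof.
have [k' ek] : exists k', k = k'.+2 by exists (k - 2)%N; lia.
have [i' ei] : exists i', i = i'.+1 by exists (i - 1)%N; lia.
have e1 : (k - 2)%N = k' by lia.
have e2 : (i + k)%N = (k' + i).+2 by lia.
rewrite e1 e2 addn2 ek.
apply: main.
- exact: lucas_ge1.
- exact: fib_ge1.
- exact: fib_mono.
- rewrite ei; exact: lucas2.
- exact: lucas_cop2.
- exact: fibL.
Qed.
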